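(* Let $\mathscr{C}\subseteq\mathrm{GF}(4)^n$ be a scalable code. The following are equivalent: (i) $\mathrm{Im}_{\mathscr{B}}(\mathscr{C})\subseteq\mathrm{GF}(2)^{2n}$ is self-orthogonal w.r.t. the canonical inner product $\sum_{i=1}^{2n}x_iy_i$ for some basis $\mathscr{B}$ of $\mathrm{GF}(4)$ over $\mathrm{GF}(2)$; (ii) $\mathrm{Im}_{\mathscr{B}}(\mathscr{C})$ is self-orthogonal w.r.t. the canonical inner product for all bases $\mathscr{B}$ of $\mathrm{GF}(4)$ over $\mathrm{GF}(2)$; (iii) $\mathscr{C}$ is self-orthogonal w.r.t. the canonical inner product $\sum_{i=1}^n x_iy_i$ on $\mathrm{GF}(4)^n$.
   Context: $\mathrm{Tr}:\mathrm{GF}(4)\to\mathrm{GF}(2)$, $\mathrm{Tr}(a)=a+a^2$. The dual basis of a basis $\{\gamma_1,\gamma_2\}$ of $\mathrm{GF}(4)$ over $\mathrm{GF}(2)$ is the unique basis $\{\beta_1,\beta_2\}$ with $\mathrm{Tr}(\gamma_i\beta_j)=\delta_{ij}$. A code $\mathscr{C}\subseteq\mathrm{GF}(4)^n$ is scalable if $x\in\mathscr{C}\Rightarrow\alpha x\in\mathscr{C}$ for all $\alpha\in\mathrm{GF}(4)$. For a basis $\mathscr{B}$ with dual basis $\{\beta_1,\beta_2\}$, $\mathrm{Im}_{\mathscr{B}}(\mathscr{C})=\{(\mathrm{Tr}(\beta_1x_1),\ldots,\mathrm{Tr}(\beta_1x_n),\mathrm{Tr}(\beta_2x_1),\ldots,\mathrm{Tr}(\beta_2x_n)):x\in\mathscr{C}\}$.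 A code $D$ is self-orthogonal w.r.t. a form $g$ if $g(x,y)=0$ for all $x,y\in D$. *)

(* Defs.v *)
From HB Require Import structures.
From mathcomp Require Import all_boot all_order all_algebra all_field.
Set Implicit Arguments. Unset Strict Implicit. Unset Printing Implicit Defensive.
Import GRing.Theory.
Local Open Scope ring_scope.

(* GF(4) is modelled as an arbitrary finite field F with #|F| = 4;
   GF(2) is 'F_2. *)

(* Tr(a) = a + a^2, computed in F (its values lie in the prime field {0,1}). *)
Definition tr (F : finFieldType) (a : F) : F := a + a ^+ 2.

(* Tr viewed as a map into GF(2) = 'F_2 (identifying the prime subfield
   {0,1} of F with 'F_2). *)
Definition trF2 (F : finFieldType) (a : F) : 'F_2 :=
  if tr a == 1 then 1 else 0.

Definition is_basis2 (F : finFieldType) (g1 g2 : F) : Prop :=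
  (forall c1 c2 : bool, (c1%:R) * g1 + (c2%:R) * g2 = 0 -> ~~ c1 /\ ~~ c2) /\
  (forall a : F, exists c1 c2 : bool, a = (c1%:R) * g1 + (c2%:R) * g2).

Definition is_dual_basis2 (F : finFieldType) (g1 g2 b1 b2 : F) : Prop :=
  [/\ tr (g1 * b1) = 1, tr (g1 * b2) = 0, tr (g2 * b1) = 0 & tr (g2 * b2) = 1].

Definition scalable_code (F : finFieldType) (n : nat) (C : {set 'rV[F]_n}) : Prop :=
  forall (x : 'rV[F]_n) (alpha : F), x \in C -> alpha *: x \in C.

Definition imB_vec (F : finFieldType) (n : nat) (b1 b2 : F) (x : 'rV[F]_n)
  : 'rV['F_2]_(n + n) :=
  row_mx (\row_j trF2 (b1 * x ord0 j)) (\row_j trF2 (b2 * x ord0 j)).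

(* Im_B(C), B with dual basis {b1, b2}. *)
Definition imB (F : finFieldType) (n : nat) (b1 b2 : F) (C : {set 'rV[F]_n})
  : {set 'rV['F_2]_(n + n)} := [set imB_vec b1 b2 x | x in C].

Definition self_orthogonal (K : finFieldType) (m : nat) (D : {set 'rV[K]_m}) : Prop :=
  forall x y : 'rV[K]_m, x \in D -> y \in D -> \sum_(i < m) x ord0 i * y ord0 i = 0.

(* Main.v *)
Require Import Defs.
From HB Require Import structures.
From mathcomp Require Import all_boot all_order all_algebra all_field.
From mathcomp Require Import ring.
Import GRing.Theory.
Local Open Scope ring_scope.

Section GF4.
Variable F : finFieldType.
Hypothesis hF : #|F| = 4%N.

Lemma x4 (x : F) : x ^+ 4 = x.
Proof. by rewrite -{2}(expf_card x) hF. Qed.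

Lemma two0 : (2%:R : F) = 0.
Proof.
have := x4 (-1). rewrite -signr_odd /= expr0 => /eqP.
by rewrite -subr_eq0 opprK => /eqP.
Qed.

Lemma addxx (x : F) : x + x = 0.
Proof. by rewrite -mulr2n -mulr_natr two0 mulr0. Qed.

Lemma oppF (x : F) : - x = x.
Proof. by apply/eqP; rewrite -subr_eq0 -opprD addxx oppr0. Qed.

Lemma sqrD (x y : F) : (x + y) ^+ 2 = x ^+ 2 + y ^+ 2.
Proof. by rewrite sqrrD -mulr_natr two0 mulr0 addr0. Qed.

Lemma trD (x y : F) : tr (x + y) = tr x + tr y.
Proof. rewrite /tr sqrD; ring. Qed.

Lemma tr0 : tr (0 : F) = 0.
Proof. by rewrite /tr expr0n /= addr0. Qed.

Lemma tr_idem (x : F) : (tr x) ^+ 2 = tr x.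
Proof. by rewrite /tr sqrD -exprM x4 addrC. Qed.

Lemma idem01 (t : F) : t ^+ 2 = t -> t = 0 \/ t = 1.
Proof.
move=> h. have : t * (t - 1) = 0 by rewrite mulrBr mulr1 -expr2 h subrr.
by move/eqP; rewrite mulf_eq0 subr_eq0 => /orP[/eqP|/eqP]; [left|right].
Qed.

Lemma tr01 (x : F) : tr x = 0 \/ tr x = 1.
Proof. exact/idem01/tr_idem. Qed.

Lemma tr0_01 (x : F) : tr x = 0 -> x = 0 \/ x = 1.
Proof.
rewrite /tr => h; apply: idem01.
by apply/eqP; rewrite -subr_eq0 -[X in _ - X]oppF opprK addrC h.
Qed.

Lemma trZ (t z : F) : t ^+ 2 = t -> tr (t * z) = t * tr z.
Proof. by move=> h; rewrite /tr exprMn h mulrDr. Qed.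

Lemma trZb (c : bool) (z : F) : tr ((c%:R : F) * z) = c%:R * tr z.
Proof. by apply: trZ; case: c; rewrite ?expr1n ?expr0n. Qed.

Lemma one_neq0 : (1 : F) != 0. Proof. exact: oner_neq0. Qed.

Lemma exists_w : exists w : F, tr w = 1.
Proof.
have : ~~ (predT \subset [set (0:F); 1]).
  apply/negP => /subset_leq_card; rewrite cardsU1 cards1.
  by rewrite (@eq_card _ _ F) // hF; case: (_ \notin _).
case/subsetPn => w _; rewrite !inE => /norP[w0 w1]; exists w.
by case: (tr01 w) => // /tr0_01 [] /eqP; rewrite ?(negPf w0) ?(negPf w1).
Qed.


Definition io (k : 'F_2) : F := if k == 0 then 0 else 1.

Lemma F2cases (k : 'F_2) : k = 0 \/ k = 1.
Proof. case: k => [[|[|m]] Hm]; [left|right|]; try exact/eqP. by []. Qed.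

Lemma io0 : io 0 = 0. Proof. by []. Qed.
Lemma io1 : io 1 = 1. Proof. by []. Qed.

Lemma ioD k l : io (k + l) = io k + io l.
Proof.
case: (F2cases k) => ->; case: (F2cases l) => ->;
  rewrite ?io0 ?io1 ?add0r ?addr0 //.
by rewrite addxx.
Qed.

Lemma ioM k l : io (k * l) = io k * io l.
Proof.
case: (F2cases k) => ->; case: (F2cases l) => ->;
  by rewrite ?io0 ?io1 ?mul0r ?mulr0 ?mulr1.
Qed.

Lemma io_eq0 k : io k = 0 -> k = 0.
Proof. by case: (F2cases k) => -> //; rewrite io1 => /eqP; rewrite oner_eq0. Qed.

Lemma io_tr a : io (trF2 a) = tr a.
Proof.
rewrite /trF2; case: eqP => [->|h] //.
by case: (tr01 a) => // ->.
Qed.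


Section Basis.
Variables g1 g2 b1 b2 : F.
Hypothesis hB : is_basis2 g1 g2.
Hypothesis hD : is_dual_basis2 g1 g2 b1 b2.

Lemma tr1_nz {z : F} : tr z = 1 -> z != 0.
Proof. by move=> h; apply/eqP => z0; move: h; rewrite z0 tr0 => /eqP; rewrite eq_sym oner_eq0. Qed.

Lemma tr0_nz1 {z : F} : tr z = 0 -> z != 0 -> z = 1.
Proof. by move=> /tr0_01 [->|->] //; rewrite eqxx. Qed.

Lemma g1nz : g1 != 0.
Proof. case: hD => h _ _ _; have := tr1_nz h; by apply: contraNneq => ->; rewrite mul0r. Qed.
Lemma g2nz : g2 != 0.
Proof. case: hD => _ _ _ h; have := tr1_nz h; by apply: contraNneq => ->; rewrite mul0r. Qed.
Lemma b1nz : b1 != 0.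
Proof. case: hD => h _ _ _; have := tr1_nz h; by apply: contraNneq => ->; rewrite mulr0. Qed.
Lemma b2nz : b2 != 0.
Proof. case: hD => _ _ _ h; have := tr1_nz h; by apply: contraNneq => ->; rewrite mulr0. Qed.

Lemma b2E : b2 = g1^-1.
Proof.
case: hD => _ h _ _; have := tr0_nz1 h; rewrite mulf_neq0 ?g1nz ?b2nz // => /(_ isT) e.
by rewrite -[b2](mulKf g1nz) e mulr1.
Qed.
Lemma b1E : b1 = g2^-1.
Proof.
case: hD => _ _ h _; have := tr0_nz1 h; rewrite mulf_neq0 ?g2nz ?b1nz // => /(_ isT) e.
by rewrite -[b1](mulKf g2nz) e mulr1.
Qed.

Lemma key (u v : F) :
  tr (b1 * u) * tr (b1 * v) + tr (b2 * u) * tr (b2 * v) = tr ((g1 * g2)^-1 * (u * v)).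
Proof.
case: hB => _ /(_ v) [c1 [c2 ->]].
case: hD => d11 d12 d21 d22.
have e1 : tr (b1 * (c1%:R * g1 + c2%:R * g2)) = c1%:R.
  rewrite mulrDr trD (mulrCA b1) trZb (mulrCA b1) trZb (mulrC b1 g1) (mulrC b1 g2) d11 d21.
  by rewrite mulr1 mulr0 addr0.
have e2 : tr (b2 * (c1%:R * g1 + c2%:R * g2)) = c2%:R.
  rewrite mulrDr trD (mulrCA b2) trZb (mulrCA b2) trZb (mulrC b2 g1) (mulrC b2 g2) d12 d22.
  by rewrite mulr1 mulr0 add0r.
rewrite e1 e2 (mulrC _ c1%:R) (mulrC _ c2%:R) -!trZb -trD.
congr tr; rewrite b1E b2E.
have := g1nz; have := g2nz => h2 h1.
field.
by rewrite h1 h2.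
Qed.

End Basis.

Lemma sum_imB (g1 g2 b1 b2 : F) (hB : is_basis2 g1 g2) (hD : is_dual_basis2 g1 g2 b1 b2)
  n (x y : 'rV[F]_n) :
  io (\sum_(i < n + n) imB_vec b1 b2 x ord0 i * imB_vec b1 b2 y ord0 i)
  = tr ((g1 * g2)^-1 * \sum_(j < n) x ord0 j * y ord0 j).
Proof.
rewrite big_split_ord /=.
rewrite ioD (big_morph io ioD io0) (big_morph io ioD io0).
rewrite mulr_sumr (big_morph (@tr F) (@trD) tr0) -big_split /=.
apply: eq_bigr => j _.
rewrite /imB_vec !row_mxEl !row_mxEr !mxE !ioM !io_tr.
exact: key.
Qed.

Lemma equiv_basis (g1 g2 b1 b2 : F) (hB : is_basis2 g1 g2) (hD : is_dual_basis2 g1 g2 b1 b2)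
  n (C : {set 'rV[F]_n}) (hC : scalable_code C) :
  self_orthogonal (imB b1 b2 C) <-> self_orthogonal C.
Proof.
split.
- move=> H x y xC yC.
  apply/eqP/negP => /negP s0.
  have [w hw] := exists_w.
  have a0 : (g1 * g2)^-1 != 0 by rewrite invr_eq0 mulf_neq0 ?(g1nz _ _ _ _ hD) ?(g2nz _ _ _ _ hD).
  set s := \sum_(j < n) _ in s0.
  pose al := w / ((g1 * g2)^-1 * s).
  have := H (imB_vec b1 b2 (al *: x)) (imB_vec b1 b2 y).
  rewrite !imset_f ?hC // => /(_ isT isT) /(congr1 io).
  rewrite (sum_imB _ _ _ _ hB hD) io0.
  have -> : \sum_(j < n) (al *: x) ord0 j * y ord0 j = al * s.
    by rewrite /s mulr_sumr; apply: eq_bigr => j _; rewrite mxE mulrA.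
  rewrite mulrCA /al -mulrA mulVf ?mulr1 ?hw.
    by move/eqP; rewrite oner_eq0.
  by rewrite mulf_neq0.
- move=> H X Y /imsetP[x xC ->] /imsetP[y yC ->].
  apply: io_eq0; rewrite (sum_imB _ _ _ _ hB hD) H // mulr0 tr0 //.
Qed.

Lemma exists_basis : exists g1 g2 b1 b2 : F, is_basis2 g1 g2 /\ is_dual_basis2 g1 g2 b1 b2.
Proof.
have [w hw] := exists_w.
have w0 : w != 0 by apply: tr1_nz.
have tr1 : tr (1 : F) = 0 by rewrite /tr expr1n addxx.
have w3 : w ^+ 3 = 1.
  by apply: (mulIf w0); rewrite /= mul1r -exprSr x4.
have trw2 : tr (w ^+ 2) = 1 by rewrite /tr -exprM x4 addrC.
have negE (z : F) : z = 0 -> - z = 0 by move=> ->; rewrite oppr0.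
exists 1, w, (w ^+ 2), 1; split; last first.
  by split; rewrite ?mul1r ?mulr1 -?exprS ?w3 ?tr1 ?trw2 ?hw.
split.
- case=> [] [] /=; rewrite ?mul1r ?mul0r ?add0r ?addr0 => h //.
  + have e : w = 1 by apply/eqP; rewrite -subr_eq0 oppF addrC h.
    by move: hw; rewrite e tr1 => /eqP; rewrite eq_sym oner_eq0.
  + by move/eqP: h; rewrite oner_eq0.
  + by move: hw; rewrite h tr0 => /eqP; rewrite eq_sym oner_eq0.
- move=> a; case: (tr01 a) => ha.
  + case: (tr0_01 a ha) => ->; [exists false, false | exists true, false];
      by rewrite ?mul1r ?mul0r ?addr0.
  + have : (a + w) * (a + w + 1) = 0.
      have -> : (a + w) * (a + w + 1) = tr (a + w) by rewrite /tr; ring.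
      by rewrite trD ha hw addxx.
    move/eqP; rewrite mulf_eq0 => /orP[] /eqP h.
    * exists false, true; rewrite mul0r mul1r add0r.
      by apply/eqP; rewrite -subr_eq0 oppF h.
    * exists true, true; rewrite !mul1r.
      by apply/eqP; rewrite -subr_eq0 oppF (addrC 1 w) addrA h.
Qed.

End GF4.

Theorem proposition1 (F : finFieldType) (hF : #|F| = 4%N) (n : nat)
  (C : {set 'rV[F]_n}) (hC : scalable_code C) :
  [/\ (exists g1 g2 b1 b2 : F, [/\ is_basis2 g1 g2, is_dual_basis2 g1 g2 b1 b2
          & self_orthogonal (imB b1 b2 C)]) <->
        (forall g1 g2 b1 b2 : F, is_basis2 g1 g2 -> is_dual_basis2 g1 g2 b1 b2 ->
          self_orthogonal (imB b1 b2 C)),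
      (forall g1 g2 b1 b2 : F, is_basis2 g1 g2 -> is_dual_basis2 g1 g2 b1 b2 ->
          self_orthogonal (imB b1 b2 C)) <-> self_orthogonal C
    & self_orthogonal C <->
        (exists g1 g2 b1 b2 : F, [/\ is_basis2 g1 g2, is_dual_basis2 g1 g2 b1 b2
          & self_orthogonal (imB b1 b2 C)])].
Proof.
have EQ := fun g1 g2 b1 b2 hB hD => @equiv_basis F hF g1 g2 b1 b2 hB hD n C hC.
have [g1 [g2 [b1 [b2 [hB hD]]]]] := @exists_basis F hF.
have S_P : self_orthogonal C -> forall g1 g2 b1 b2 : F, is_basis2 g1 g2 ->
    is_dual_basis2 g1 g2 b1 b2 -> self_orthogonal (imB b1 b2 C).
  by move=> S h1 h2 h3 h4 hB' hD'; exact: (proj2 (EQ _ _ _ _ hB' hD') S).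
split; split.
- case=> [k1 [k2 [k3 [k4 [hB' hD' hS]]]]]; exact: (S_P (proj1 (EQ _ _ _ _ hB' hD') hS)).
- move=> P; exists g1, g2, b1, b2; split; [exact: hB|exact: hD|exact: (P _ _ _ _ hB hD)].
- move=> P; exact: (proj1 (EQ _ _ _ _ hB hD) (P _ _ _ _ hB hD)).
- exact: S_P.
- move=> S; exists g1, g2, b1, b2; split; [exact: hB|exact: hD|exact: (S_P S _ _ _ _ hB hD)].
- case=> [k1 [k2 [k3 [k4 [hB' hD' hS]]]]]; exact: (proj1 (EQ _ _ _ _ hB' hD') hS).
Qed.
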